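(* Let $G$ be a connected diamond-free graph in which every induced $P_4$ is settled. Then either $G$ is complete bipartite, or every edge $uv\in E(G)$ such that $\{u,v\}$ is a maximal clique of $G$ is a simplicial clique of $G$.
   Context: An induced $P_4$ $(a,b,c,d)$ (path $a-b-c-d$, induced) is settled if $G$ has a vertex adjacent to both $b$ and $c$ and non-adjacent to both $a$ and $d$. A vertex $v$ is simplicial if $N[v]$ is a clique; a clique is simplicial if it equals $N[v]$ for some simplicial vertex $v$. The diamond is $K_4$ minus one edge; diamond-free means no induced diamond. *)

(* Defs.v *)
From mathcomp Require Import all_boot.
Set Implicit Arguments. Unset Strict Implicit. Unset Printing Implicit Defensive.

Section Graphs.
Variable T : finType.
Variable e : rel T.

Definition simple_graph : Prop := symmetric e /\ irreflexive e.

Definition connected_graph : Prop := forall x y : T, connect e x y.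

Definition closed_nbhd (v : T) : {set T} := [set x | (x == v) || e v x].

Definition is_clique (K : {set T}) : Prop :=
  forall x y, x \in K -> y \in K -> x != y -> e x y.

Definition simplicial (v : T) : Prop := is_clique (closed_nbhd v).

Definition simplicial_clique (K : {set T}) : Prop :=
  exists v, simplicial v /\ K = closed_nbhd v.

Definition maximal_clique (K : {set T}) : Prop :=
  is_clique K /\ forall K' : {set T}, is_clique K' -> K \subset K' -> K' = K.

(* (a,b,c,d) induces the path a-b-c-d (distinctness follows from simplicity) *)
Definition induced_P4 (a b c d : T) : Prop :=
  [/\ e a b, e b c, e c d & [/\ ~~ e a c, ~~ e b d & ~~ e a d]].

Definition settled (a b c d : T) : Prop :=
  exists w, [/\ e w b, e w c, ~~ e w a & ~~ e w d].

Definition diamond_free : Prop :=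
  ~ exists x y u v : T,
      [/\ x != y, ~~ e x y, e u v & [/\ e u x, e u y, e v x & e v y]].

Definition complete_bipartite : Prop :=
  exists A : {set T}, A != set0 /\ ~: A != set0 /\
    forall x y, e x y = ((x \in A) != (y \in A)).

End Graphs.

(* Main.v *)
Require Import Defs.
From mathcomp Require Import all_boot.
From Stdlib Require Import Classical.

Lemma key (T : finType) (e : rel T) (Es : symmetric e) (Ei : irreflexive e)
  (Hc : connected_graph e) (Hd : diamond_free e)
  (Hs : forall a b c d, induced_P4 e a b c d -> settled e a b c d)
  u v x y (uv : e u v) (nc : forall w, e u w -> e v w -> False)
  (ux : e u x) (xv : x != v) (vy : e v y) (yu : y != u) :
  complete_bipartite e.
Proof.
have F1 : forall a b, e v a -> e u b -> e a b.
  move=> a b va ub; apply/negPn/negP => nab.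
  have P4 : induced_P4 e b u v a.
    split; [by rewrite Es | done | done | split].
    - by apply/negP => bv; apply: (nc b ub); rewrite Es.
    - by apply/negP => ua; apply: (nc a ua va).
    - by rewrite Es.
  have [w [wu wv _ _]] := Hs _ _ _ _ P4.
  by apply: (nc w); rewrite Es.
have IA : forall a a', e v a -> e v a' -> ~~ e a a'.
  move=> a a' va va'; apply/negP => aa'; apply: Hd.
  exists v, x, a, a'; split.
  - by rewrite eq_sym.
  - by apply/negP => vx; apply: (nc x ux vx).
  - done.
  - split; [by rewrite Es | exact: F1 | by rewrite Es | exact: F1].
have IB : forall b b', e u b -> e u b' -> ~~ e b b'.
  move=> b b' ub ub'; apply/negP => bb'; apply: Hd.
  exists u, y, b, b'; split.
  - by rewrite eq_sym.
  - by apply/negP => uy; apply: (nc y uy vy).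
  - done.
  - split; [by rewrite Es | by rewrite Es; exact: F1 | by rewrite Es | by rewrite Es; exact: F1].
pose S := [set z | e v z || e u z].
have cl : forall s z, e s z -> s \in S -> z \in S.
  move=> s z sz; rewrite !inE => /orP [vs | us].
  - case uz: (e u z); first by rewrite orbT.
    apply/orP; left; apply/negPn/negP => nvz.
    have P4 : induced_P4 e z s v u.
      split; [by rewrite Es | by rewrite Es | by rewrite Es | split].
      - by rewrite Es.
      - by apply/negP => su; apply: (nc s); [rewrite Es|].
      - by rewrite Es uz.
    have [w [ws wv _ _]] := Hs _ _ _ _ P4.
    by move: (IA w s); rewrite ws Es wv vs => /(_ isT isT).
  - case vz: (e v z); first done.
    apply/orP; right; apply/negPn/negP => nuz.
    have P4 : induced_P4 e z s u v.
      split; [by rewrite Es | by rewrite Es | done | split].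
      - by rewrite Es.
      - by apply/negP => sv; apply: (nc s us); rewrite Es.
      - by rewrite Es vz.
    have [w [ws wu _ _]] := Hs _ _ _ _ P4.
    by move: (IB w s); rewrite ws Es wu us => /(_ isT isT).
have clS : closed e S.
  intros a b ab; apply/idP/idP; first exact: cl.
  by apply: cl; rewrite Es.
have allS : forall z, z \in S.
  move=> z; rewrite -(closed_connect clS (Hc u z)).
  by rewrite inE Es uv.
exists [set z | e v z]; split; [|split].
- by apply/set0Pn; exists u; rewrite inE Es.
- by apply/set0Pn; exists v; rewrite !inE Ei.
- move=> a b; rewrite !inE.
  case va: (e v a); case vb: (e v b) => /=.
  + by apply/negbTE; apply: IA.
  + have := allS b; rewrite inE vb /= => ub; exact: F1.
  + have := allS a; rewrite inE va /= => ua; rewrite Es; exact: F1.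
  + have := allS a; rewrite inE va /= => ua.
    have := allS b; rewrite inE vb /= => ub.
    by apply/negbTE; apply: IB.
Qed.

Theorem lemma5 (T : finType) (e : rel T) :
  simple_graph e -> connected_graph e -> diamond_free e ->
  (forall a b c d, induced_P4 e a b c d -> settled e a b c d) ->
  complete_bipartite e \/
  (forall u v, e u v -> maximal_clique e [set u; v] ->
     simplicial_clique e [set u; v]).
Proof.
move=> [Es Ei] Hc Hd Hs.
case: (classic (complete_bipartite e)) => HB; [by left | right].
move=> u v uv [Kc Km].
have nc : forall w, e u w -> e v w -> False.
  move=> w uw vw.
  have : w \in [set u; v; w].
    by rewrite !inE eqxx !orbT.
  rewrite (Km [set u; v; w]).
  - by rewrite !inE => /orP [] /eqP wE; move: uw vw; rewrite wE Ei // ; move=> _ _ .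
  - move=> p q; rewrite !inE => /orP [/orP [] /eqP -> | /eqP ->]
      /orP [/orP [] /eqP -> | /eqP ->]; rewrite ?eqxx // => _;
      by rewrite ?uv ?uw ?vw // Es ?uv ?uw ?vw.
  - by apply/subsetP => z; rewrite !inE => ->.
have simp : forall a b, e a b -> (forall x, e a x -> x == b) ->
    [set a; b] = [set u; v] -> simplicial_clique e [set u; v].
  move=> a b ab Ha Hab.
  have Na : closed_nbhd e a = [set a; b].
    apply/setP => z; rewrite /closed_nbhd !inE; case: (z =P a) => //= _.
    by apply/idP/idP => [/Ha //| /eqP ->].
  exists a; split; last by rewrite Na.
  rewrite /simplicial Na Hab.
  exact: Kc.
case: (boolP [exists x, e u x && (x != v)]) => [/existsP [x /andP [ux xv]] | /existsPn Nx].
  case: (boolP [exists y, e v y && (y != u)]) => [/existsP [y /andP [vy yu]] | /existsPn Ny].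
    by case: (HB (@key _ _ Es Ei Hc Hd Hs _ _ _ _ uv nc ux xv vy yu)).
  apply: (simp v u); first by rewrite Es.
    by move=> z vz; have := Ny z; rewrite vz /= negbK.
  exact: setUC.
apply: (simp u v uv) => //.
by move=> z uz; have := Nx z; rewrite uz /= negbK.
Qed.
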